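(* Let $G$ be a finite connected graph with maximum degree at most $\Delta$, where $\Delta\ge2$, and with diameter $D=\mathrm{diam}(G)\ge2$ in the hop metric. Then, under geodesic routing, every vertex $v$ of $G$ satisfies $$T(v)\le \Delta^2(\Delta-1)^{D-2}D^2.$$
   Context: Geodesic routing and vertex flow on a finite connected graph $G$: $d$ denotes the hop (graph) metric; for each unordered pair of distinct vertices $\{v,w\}$ one unit of flow is sent from $v$ to $w$ along shortest paths, where at each vertex $v'$ on a shortest path the flow arriving at $v'$ is split equally among the neighbors $x$ of $v'$ with $d(x,w)=d(v',w)-1$. The vertex flow $T(u)$ of a vertex $u$ is the total flow (over all pairs, including pairs having $u$ as an endpoint) passing through $u$. *)

(* Defs.v *)
From HB Require Import structures.
From mathcomp Require Import all_boot all_order all_algebra.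
Set Implicit Arguments. Unset Strict Implicit. Unset Printing Implicit Defensive.
Import Order.TTheory GRing.Theory Num.Theory.

(* A finite simple graph: vertex type T : finType, adjacency e : rel T,
   assumed symmetric and irreflexive in the theorem. *)

Fixpoint reach (T : finType) (e : rel T) (n : nat) (x : T) : {set T} :=
  match n with
  | 0 => [set x]
  | n'.+1 => reach e n' x :|: [set y | [exists z in reach e n' x, e z y]]
  end.

(* Hop distance: least n with y within n steps of x.  In a connected graph
   this is < #|T|, so the search bound is harmless. *)
Definition dist (T : finType) (e : rel T) (x y : T) : nat :=
  find (fun n => y \in reach e n x) (iota 0 #|T|).

Definition diam (T : finType) (e : rel T) : nat :=
  \max_(x : T) \max_(y : T) dist e x y.

Definition deg (T : finType) (e : rel T) (x : T) : nat := #|[set y | e x y]|.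

Local Open Scope ring_scope.

Definition downdeg (T : finType) (e : rel T) (w p : T) : nat :=
  #|[set x | e p x && ((dist e x w).+1 == dist e p w)%N]|.

Definition step (T : finType) (e : rel T) (w : T) (phi : T -> rat) : T -> rat :=
  fun x => \sum_(p : T | e p x && ((dist e x w).+1 == dist e p w)%N)
             phi p / (downdeg e w p)%:R.

Definition phi (T : finType) (e : rel T) (v w : T) (k : nat) : T -> rat :=
  iter k (step e w) (fun x => (x == v)%:R).

(* Total flow of the v->w unit that passes through u (including endpoints).
   After d(v,w) steps all flow sits at w, which forwards nothing. *)
Definition flow (T : finType) (e : rel T) (v w u : T) : rat :=
  \sum_(k < #|T|) phi e v w k u.

(* Vertex flow T(u): sum over unordered pairs {v,w}, each pair routed in the
   direction chosen by the orientation o (o v w means "send from v to w"). *)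
Definition vflow (T : finType) (e : rel T) (o : rel T) (u : T) : rat :=
  \sum_(v : T) \sum_(w : T | (v != w) && o v w) flow e v w u.

(* Main.v *)
Require Import Defs.
From HB Require Import structures.
From mathcomp Require Import all_boot all_order all_algebra.
From mathcomp Require Import zify ring.
Set Implicit Arguments. Unset Strict Implicit. Unset Printing Implicit Defensive.
Import Order.TTheory GRing.Theory Num.Theory.

Lemma reachS (T : finType) (e : rel T) n x y :
  (y \in reach e n.+1 x) = (y \in reach e n x) || [exists z in reach e n x, e z y].
Proof. by rewrite /= in_setU inE. Qed.

Lemma reach0 (T : finType) (e : rel T) x y : (y \in reach e 0 x) = (y == x).
Proof. by rewrite /= inE. Qed.

Lemma reach_le (T : finType) (e : rel T) m n x y :
  (m <= n)%N -> y \in reach e m x -> y \in reach e n x.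
Proof.
elim: n => [|n IH]; first by rewrite leqn0 => /eqP->.
rewrite leq_eqVlt => /orP[/eqP->//|]; rewrite ltnS => /IH H /H.
by rewrite reachS => ->.
Qed.

Lemma reach_step (T : finType) (e : rel T) n x z y :
  z \in reach e n x -> e z y -> y \in reach e n.+1 x.
Proof. by move=> Hz Hzy; rewrite reachS; apply/orP; right; apply/existsP; exists z; rewrite Hz. Qed.

Lemma reach_prepend (T : finType) (e : rel T) k x p z :
  e x p -> z \in reach e k p -> z \in reach e k.+1 x.
Proof.
move=> Hxp; elim: k z => [|k IH] z.
  by rewrite reach0 => /eqP->; apply: (reach_step (z:=x)); rewrite ?reach0.
rewrite reachS => /orP[/IH|/existsP[y /andP[Hy Hyz]]].
  by apply: reach_le.
by apply: reach_step (IH _ Hy) Hyz.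
Qed.

Definition eclosed (T : finType) (e : rel T) (A : {set T}) :=
  [forall z, forall y, (z \in A) && e z y ==> (y \in A)].

Lemma reach_grow (T : finType) (e : rel T) x n :
  (n < #|reach e n x|)%N || eclosed e (reach e n x).
Proof.
elim: n => [|n IH]; first by rewrite /= cards1.
case Hc: (eclosed e (reach e n x)).
  have Heq : reach e n.+1 x = reach e n x.
    apply/setP => y; rewrite reachS; apply/orP/idP => [[//|/existsP[z /andP[Hz Hzy]]]|]; last by move=> ?; left.
    by move/forallP: Hc => /(_ z)/forallP/(_ y); rewrite Hz Hzy.
  by rewrite Heq Hc orbT.
move: IH; rewrite Hc orbF => Hn.
move/negbT: Hc; rewrite negb_forall => /existsP[z]; rewrite negb_forall => /existsP[y].
rewrite negb_imply => /andP[/andP[Hz Hzy] Hy].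
apply/orP; left.
have Hsub : y |: reach e n x \subset reach e n.+1 x.
  apply/subsetP => t; rewrite in_setU1 => /orP[/eqP->|Ht].
    exact: reach_step Hz Hzy.
  by apply: reach_le Ht.
apply: leq_trans (subset_leq_card Hsub).
by rewrite cardsU1 Hy add1n ltnS.
Qed.

Lemma closed_connect (T : finType) (e : rel T) (A : {set T}) x y :
  eclosed e A -> x \in A -> connect e x y -> y \in A.
Proof.
move=> HA Hx /connectP[p Hp ->]; elim: p x Hx Hp => [//|z p IH] x Hx /= /andP[Hxz Hp].
apply: IH Hp; move/forallP: HA => /(_ x)/forallP/(_ z); by rewrite Hx Hxz.
Qed.

Lemma reach_all (T : finType) (e : rel T) (e_conn : forall x y : T, connect e x y) x y :
  y \in reach e #|T|.-1 x.
Proof.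
case/orP: (reach_grow e x #|T|.-1) => [H|H].
  have : reach e #|T|.-1 x = setT.
    apply/eqP; rewrite eqEcard subsetT cardsT.
    have Hpos : (0 < #|T|)%N by apply/card_gt0P; exists x.
    by rewrite -(prednK Hpos).
  by move->; rewrite inE.
by apply: closed_connect H _ (e_conn x y); apply: (reach_le (m:=0)); rewrite ?reach0.
Qed.

Lemma dist_has (T : finType) (e : rel T) (e_conn : forall x y : T, connect e x y) x y :
  has (fun n => y \in reach e n x) (iota 0 #|T|).
Proof.
have Hpos : (0 < #|T|)%N by apply/card_gt0P; exists x.
apply/hasP; exists #|T|.-1; last exact: reach_all.
by rewrite mem_iota add0n prednK // leqnn andbT.
Qed.

Lemma dist_lt (T : finType) (e : rel T) (e_conn : forall x y : T, connect e x y) x y :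
  (dist e x y < #|T|)%N.
Proof. by move: (dist_has e_conn x y); rewrite has_find size_iota. Qed.

Lemma dist_reach (T : finType) (e : rel T) (e_conn : forall x y : T, connect e x y) x y :
  y \in reach e (dist e x y) x.
Proof.
have := nth_find 0 (dist_has e_conn x y).
by rewrite nth_iota ?add0n //; apply: dist_lt.
Qed.

Lemma dist_min (T : finType) (e : rel T) (e_conn : forall x y : T, connect e x y) x y n :
  y \in reach e n x -> (dist e x y <= n)%N.
Proof.
move=> H; rewrite leqNgt; apply/negP => Hlt.
have := before_find 0 Hlt; rewrite nth_iota ?add0n ?H //.
exact: ltn_trans Hlt (dist_lt e_conn x y).
Qed.

Lemma dist0 (T : finType) (e : rel T) (e_conn : forall x y : T, connect e x y) x y :
  (dist e x y == 0)%N = (y == x).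
Proof.
apply/eqP/eqP => [H|->].
  by have := dist_reach e_conn x y; rewrite H reach0 => /eqP.
by apply/eqP; rewrite -leqn0; apply: (dist_min e_conn); rewrite reach0.
Qed.

Lemma dist_pred (T : finType) (e : rel T) (e_conn : forall x y : T, connect e x y) x y r :
  dist e x y = r.+1 -> exists z, dist e x z = r /\ e z y.
Proof.
move=> H; have := dist_reach e_conn x y; rewrite H reachS => /orP[Hr|].
  by have := dist_min e_conn Hr; rewrite H ltnn.
case/existsP => z /andP[Hz Hzy]; exists z; split => //.
apply/eqP; rewrite eqn_leq (dist_min e_conn Hz) /= leqNgt; apply/negP => Hlt.
have Hz' := dist_reach e_conn x z.
have Hy : y \in reach e r x.
  case: r H Hz Hlt {Hz'} => // r H Hz Hlt.
  apply: reach_step Hzy; apply: reach_le (dist_reach e_conn x z).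
  by rewrite -ltnS.
by have := dist_min e_conn Hy; rewrite H ltnn.
Qed.

Lemma dist_diam (T : finType) (e : rel T) x y : (dist e x y <= diam e)%N.
Proof.
rewrite /diam; apply: leq_trans (leq_bigmax x); exact: (leq_bigmax y).
Qed.

Lemma card_le_sum (T : finType) (A B : {set T}) (r : rel T) :
  (forall x, x \in A -> exists2 z, z \in B & r z x) ->
  (#|A| <= \sum_(z in B) #|[set x in A | r z x]|)%N.
Proof.
move=> H.
have E : forall z, #|[set x in A | r z x]| = \sum_(x in A) (r z x : nat).
  move=> z; rewrite -sum1_card big_mkcond [RHS]big_mkcond /=; apply: eq_bigr => x _.
  by rewrite inE; case: (x \in A); case: (r z x).
under eq_bigr do rewrite E.
rewrite exchange_big /= -sum1_card; apply: leq_sum => x Hx.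
have [z Hz Hr] := H x Hx.
by rewrite (bigD1 z) //= Hr.
Qed.

Definition sph (T : finType) (e : rel T) u r := #|[set x | dist e u x == r]|.
Definition ball (T : finType) (e : rel T) u r := #|[set x | (dist e u x <= r)%N]|.

Lemma sph1 (T : finType) (e : rel T) (e_conn : forall x y : T, connect e x y)
  Delta (hdeg : forall x : T, (deg e x <= Delta)%N) u : (sph e u 1 <= Delta)%N.
Proof.
apply: leq_trans (hdeg u); apply: subset_leq_card; apply/subsetP => x.
rewrite !inE => /eqP H; have [z [Hz Hzx]] := dist_pred e_conn H.
by move/eqP: Hz; rewrite dist0 // => /eqP <-.
Qed.

Lemma sphS (T : finType) (e : rel T) (e_sym : symmetric e)
  (e_conn : forall x y : T, connect e x y)
  Delta (hdeg : forall x : T, (deg e x <= Delta)%N) u r :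
  (sph e u r.+2 <= sph e u r.+1 * (Delta - 1))%N.
Proof.
rewrite /sph.
apply: leq_trans (card_le_sum (B := [set x | dist e u x == r.+1]) (r := e) _) _.
  move=> x; rewrite inE => /eqP H; have [z [Hz Hzx]] := dist_pred e_conn H.
  by exists z; rewrite ?inE ?Hz.
rewrite -sum1_card big_distrl /=; apply: leq_sum => z; rewrite inE mul1n => /eqP Hz.
have [p [Hp Hpz]] := dist_pred e_conn Hz.
have Hsub : p |: [set x in [set x | dist e u x == r.+2] | e z x] \subset [set y | e z y].
  apply/subsetP => t; rewrite !inE => /orP[/eqP->|/andP[_ ->]] //.
  by rewrite e_sym.
have := leq_trans (subset_leq_card Hsub) (hdeg z).
rewrite cardsU1 !inE Hp /=.
have -> : (r == r.+2) = false by elim: r {Hz Hp Hsub}.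
by move=> /= H; lia.
Qed.

Lemma sph_bound (T : finType) (e : rel T) (e_sym : symmetric e)
  (e_conn : forall x y : T, connect e x y)
  Delta (hdeg : forall x : T, (deg e x <= Delta)%N) u r :
  (sph e u r.+1 <= Delta * (Delta - 1) ^ r)%N.
Proof.
elim: r => [|r IH]; first by rewrite expn0 muln1; apply: sph1.
apply: leq_trans (sphS e_sym e_conn hdeg u r) _.
by rewrite expnS mulnA [Delta * _]mulnC; rewrite -mulnA mulnC leq_mul2l IH orbT.
Qed.

Lemma ball_bound (T : finType) (e : rel T) (e_sym : symmetric e)
  (e_conn : forall x y : T, connect e x y)
  Delta (hDelta : (2 <= Delta)%N) (hdeg : forall x : T, (deg e x <= Delta)%N) u r :
  (ball e u r <= 1 + r * (Delta * (Delta - 1) ^ r.-1))%N.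
Proof.
elim: r => [|r IH].
  rewrite /ball (_ : [set x | (dist e u x <= 0)%N] = [set u]) ?cards1 //.
  by apply/setP => x; rewrite !inE leqn0 dist0.
have -> : ball e u r.+1 = (ball e u r + sph e u r.+1)%N.
  rewrite /ball /sph (_ : [set x | (dist e u x <= r.+1)%N] =
     [set x | (dist e u x <= r)%N] :|: [set x | dist e u x == r.+1]).
    rewrite cardsU (_ : _ :&: _ = set0) ?cards0 ?subn0 //.
    by apply/setP => x; rewrite !inE; apply/negP => /andP[H1 /eqP H2]; move: H1; rewrite H2 ltnn.
  by apply/setP => x; rewrite !inE leq_eqVlt ltnS orbC.
have Hs := sph_bound e_sym e_conn hdeg u r.
have Ha : (Delta - 1) ^ r.-1 <= (Delta - 1) ^ r.
  by case: r {IH Hs} => // r; rewrite leq_pexp2l //; lia.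
simpl.
nia.
Qed.

Lemma sum_card (T : finType) (P : pred T) : (\sum_w (P w : nat) = #|[set w | P w]|)%N.
Proof.
rewrite -sum1_card [RHS]big_mkcond /=; apply: eq_bigr => w _; rewrite inE.
by case: (P w).
Qed.

Lemma group_dist (T : finType) (e : rel T) u Dm (F : nat -> nat) :
  (forall v, dist e u v <= Dm)%N ->
  (\sum_v F (dist e u v) = \sum_(i < Dm.+1) sph e u i * F i)%N.
Proof.
move=> HD.
have E : forall v, F (dist e u v) = (\sum_(i < Dm.+1) ((dist e u v == i) : nat) * F i)%N.
  move=> v; have Hv : (dist e u v < Dm.+1)%N by rewrite ltnS.
  rewrite (bigD1 (Ordinal Hv)) //= eqxx mul1n big1 ?addn0 // => i Hi.
  rewrite (_ : (dist e u v == i) = false) //; apply/negbTE; apply: contra Hi => /eqP H.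
  by apply/eqP; apply: val_inj; rewrite /= H.
under eq_bigr do rewrite E.
rewrite exchange_big /=; apply: eq_bigr => i _.
by rewrite -big_distrl /= sum_card.
Qed.

Lemma halve (T : finType) (o : rel T) (ho : forall v w : T, v != w -> o v w (+) o w v)
  (c : T -> T -> nat) (csym : forall v w, c v w = c w v) :
  (\sum_v \sum_(w | (v != w) && o v w) c v w) * 2 = \sum_v \sum_(w | v != w) c v w.
Proof.
set X := \sum_v _.
have HX : X = \sum_v \sum_(w | (v != w) && o w v) c v w.
  rewrite /X; under eq_bigr do rewrite big_mkcond.
  under [RHS]eq_bigr do rewrite big_mkcond.
  rewrite [RHS]exchange_big /=; apply: eq_bigr => v _; apply: eq_bigr => w _.
  by rewrite eq_sym csym.
rewrite muln2 -addnn {2}HX -big_split /=; apply: eq_bigr => v _.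
rewrite [RHS]big_mkcond [X in X + _]big_mkcond [X in _ + X]big_mkcond -big_split /=; apply: eq_bigr => w _.
case: (eqVneq v w) => //= Hvw.
by have := ho v w Hvw; case: (o v w); case: (o w v) => //=; rewrite addn0.
Qed.

Lemma arith (X Y P Dm : nat) : (1 < Dm)%N -> (0 < P)%N -> (Y <= P)%N ->
  (X * 2 <= 1 + Y + (Y + (Dm - 1) * P))%N -> (X <= Dm * P)%N.
Proof.
case: Dm => [|[|d]] // _ HP HY.
rewrite subSS subn0 !mulSn; lia.
Qed.

Lemma count_bound (T : finType) (e : rel T)
    (e_sym : symmetric e)
    (e_conn : forall x y : T, connect e x y)
    (Delta : nat) (hDelta : (2 <= Delta)%N)
    (hdeg : forall x : T, (deg e x <= Delta)%N)
    (hdiam : (2 <= diam e)%N)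
    (o : rel T) (ho : forall v w : T, v != w -> o v w (+) o w v)
    (u : T) :
  (\sum_v \sum_(w | (v != w) && o v w) ((dist e u v + dist e u w <= diam e)%N : nat)
    <= Delta ^ 2 * (Delta - 1) ^ (diam e - 2) * (diam e) ^ 2)%N.
Proof.
set Dm := diam e; set a := (Delta - 1)%N.
have HD : forall v, (dist e u v <= Dm)%N by move=> v; apply: dist_diam.
set c := fun v w => ((dist e u v + dist e u w <= Dm)%N : nat).
have csym : forall v w, c v w = c w v by move=> v w; rewrite /c addnC.
have H2 := halve ho csym.
set G := fun i => ((Dm - i) * (Delta * a ^ (Dm - i).-1))%N.
have Hs : (\sum_v \sum_(w | v != w) c v w <= \sum_v (1 + G (dist e u v)))%N.
  apply: leq_sum => v _.
  apply: leq_trans (_ : \sum_w c v w <= _)%N.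
    by rewrite [X in (_ <= X)%N](bigID (fun w => v != w)) /= leq_addr.
  rewrite /c sum_card; apply: leq_trans (ball_bound e_sym e_conn hDelta hdeg u _).
  apply: subset_leq_card; apply/subsetP => w; rewrite !inE => H.
  by rewrite leq_subRL ?HD.
rewrite big_split /= in Hs.
have Hcard : (\sum_(v : T) 1 <= 1 + Dm * (Delta * a ^ Dm.-1))%N.
  apply: leq_trans (ball_bound e_sym e_conn hDelta hdeg u Dm).
  rewrite (sum_card (fun _ => true)); apply: subset_leq_card; apply/subsetP => w.
  by rewrite !inE HD.
rewrite (group_dist G HD) big_ord_recl /= in Hs.
have Hs0 : sph e u 0 = 1%N.
  rewrite /sph (_ : [set x | dist e u x == 0%N] = [set u]) ?cards1 //.
  by apply/setP => x; rewrite !inE dist0.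
rewrite Hs0 mul1n in Hs.
set M := (Delta ^ 2 * a ^ (Dm - 2))%N.
have Hterm : forall i : 'I_Dm, (sph e u (bump 0 i) * G (bump 0 i) <= (Dm - 1) * M)%N.
  move=> i; rewrite /bump /= add1n.
  apply: leq_trans (leq_mul (sph_bound e_sym e_conn hdeg u i) (leqnn _)) _.
  rewrite /G.
  have Hi := ltn_ord i.
  case: (ltnP i.+1 Dm) => Hlt; last first.
    by rewrite (_ : (Dm - i.+1)%N = 0%N) ?mul0n ?muln0 //; lia.
  have Hex : (a ^ i * a ^ (Dm - i.+1).-1 = a ^ (Dm - 2))%N.
    by rewrite -expnD; congr (expn _ _); lia.
  have -> : (Delta * a ^ i * ((Dm - i.+1) * (Delta * a ^ (Dm - i.+1).-1))
             = (Dm - i.+1) * (Delta ^ 2 * (a ^ i * a ^ (Dm - i.+1).-1)))%N.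
    by ring.
  by rewrite Hex leq_mul2r; apply/orP; right; lia.
have Hrest : (\sum_(i < Dm) sph e u (bump 0 i) * G (bump 0 i) <= Dm * ((Dm - 1) * M))%N.
  by rewrite -[X in (_ <= X * _)%N]card_ord -sum_nat_const; apply: leq_sum => i _; exact: Hterm.
have HQ : (Delta * a ^ Dm.-1 <= M)%N.
  rewrite /M (_ : Dm.-1 = (Dm - 2).+1); last by lia.
  by rewrite expnS -mulnA leq_mul2l leq_mul2r; apply/orP; right; apply/orP; right; lia.
have HP : (0 < a ^ (Dm - 2))%N by rewrite expn_gt0; apply/orP; left; lia.
have HM : (0 < M)%N by rewrite /M muln_gt0 HP andbT expn_gt0; apply/orP; left; lia.
have HG0 : G 0 = (Dm * (Delta * a ^ Dm.-1))%N by rewrite /G subn0.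
set Q := (Delta * a ^ Dm.-1)%N in HQ HG0 Hcard.
have Hfin : ((\sum_v \sum_(w | (v != w) && o v w) c v w) * 2
   <= 1 + Dm * Q + (Dm * Q + Dm * ((Dm - 1) * M)))%N.
  rewrite H2; apply: leq_trans Hs _; rewrite HG0; apply: leq_add; first exact: Hcard.
  by apply: leq_add; [exact: leqnn | exact: Hrest].
have HDQ : (Dm * Q <= Dm * M)%N by rewrite leq_mul2l HQ orbT.
change ((\sum_v \sum_(w | (v != w) && o v w) c v w) <= M * Dm ^ 2)%N.
move: Hfin HDQ HM hdiam.
set X := (\sum_v _)%N.
rewrite -/Dm.
move=> Hfin HDQ HM hd.
clear -Hfin HDQ HM hd.
have E1 : (Dm * ((Dm - 1) * M) = (Dm - 1) * (Dm * M))%N by ring.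
have E2 : (M * Dm ^ 2 = Dm * (Dm * M))%N by ring.
rewrite E2; rewrite E1 in Hfin.
have HP : (0 < Dm * M)%N by rewrite muln_gt0 HM andbT; lia.
exact: (@arith _ _ _ _ hd HP HDQ Hfin).
Qed.
Local Open Scope ring_scope.

Lemma phiS (T : finType) (e : rel T) v w k :
  phi e v w k.+1 = step e w (phi e v w k).
Proof. by rewrite /phi iterS. Qed.

Lemma phi_ge0 (T : finType) (e : rel T) v w k x : 0 <= phi e v w k x.
Proof.
elim: k x => [|k IH] x; first by rewrite /phi /=; case: (x == v).
rewrite phiS /step; apply: sumr_ge0 => p _; apply: divr_ge0 => //.
Qed.

Lemma phi_supp (T : finType) (e : rel T) (e_sym : symmetric e) v w k x :
  phi e v w k x != 0 -> ((dist e x w + k)%N == dist e v w) && (v \in reach e k x).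
Proof.
elim: k x => [|k IH] x.
  rewrite /phi /=; have [->|Hne] := eqVneq x v; last by rewrite eqxx.
  by move=> _; rewrite addn0 inE !eqxx.
rewrite phiS /step => H.
have [p /andP[Hpx /eqP Hd] Hp] : exists2 p, e p x && ((dist e x w).+1 == dist e p w)%N
    & phi e v w k p != 0.
  apply/exists_inP; apply: contraNT H; rewrite negb_exists_in => /forall_inP H.
  apply/eqP; apply: big1 => p Hp; have := H p Hp; rewrite negbK => /eqP->.
  by rewrite mul0r.
case/andP: (IH p Hp) => /eqP <- Hr.
rewrite -Hd addSnnS eqxx /=.
by apply: reach_prepend Hr; rewrite e_sym.
Qed.

Lemma phi_mass (T : finType) (e : rel T) v w k : \sum_x phi e v w k x <= 1.
Proof.
elim: k => [|k IH].
  by rewrite /phi /= (bigD1 v) //= eqxx big1 ?addr0 // => x /negbTE ->.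
apply: le_trans IH; rewrite phiS /step.
rewrite (exchange_big_dep xpredT) //=.
apply: ler_sum => p _.
rewrite sumr_const.
set c := #|_|.
have -> : c = downdeg e w p.
  by rewrite /c /downdeg; apply: eq_card => x; rewrite !inE.
have [->|Hn] := eqVneq (downdeg e w p) 0%N.
  by rewrite mulr0n phi_ge0.
set d := downdeg e w p; set Dr := (d%:R : rat). rewrite -mulr_natr -/Dr mulfVK // /Dr pnatr_eq0 //.

Qed.

Lemma phi_le1 (T : finType) (e : rel T) v w k x : phi e v w k x <= 1.
Proof.
apply: le_trans (phi_mass e v w k).
rewrite (bigD1 x) //= lerDl; apply: sumr_ge0 => y _; exact: phi_ge0.
Qed.

Lemma flow_le (T : finType) (e : rel T) (e_sym : symmetric e)
  (e_conn : forall x y : T, connect e x y) v w u :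
  flow e v w u <= ((dist e u v + dist e u w <= diam e)%N)%:R.
Proof.
rewrite /flow.
case Hc: (dist e u v + dist e u w <= diam e)%N; last first.
  rewrite big1 // => k _; apply/eqP; apply: contraFT Hc => /(phi_supp e_sym).
  case/andP => /eqP Hd /(dist_min e_conn) Hk.
  apply: leq_trans (dist_diam e v w); rewrite -Hd addnC; exact: leq_add.
pose k0 := (dist e v w - dist e u w)%N.
have Hz : forall k : 'I_#|T|, (k : nat) != k0 -> phi e v w k u = 0.
  move=> k Hk; apply/eqP; apply: contraNT Hk => /(phi_supp e_sym) /andP[/eqP Hd _].
  by rewrite /k0 -Hd addKn.
case: (ltnP k0 #|T|) => Hk0.
  rewrite (bigD1 (Ordinal Hk0)) //= big1 ?addr0 ?phi_le1 // => k Hk.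
rewrite big1 // => k _; apply: Hz; rewrite neq_ltn.
by rewrite (leq_trans (ltn_ord k) Hk0).
Qed.

Unset Implicit Arguments.

Theorem mainTheorem3 (T : finType) (e : rel T)
    (e_sym : symmetric e) (e_irr : irreflexive e)
    (e_conn : forall x y : T, connect e x y)
    (Delta : nat) (hDelta : (2 <= Delta)%N)
    (hdeg : forall x : T, (deg e x <= Delta)%N)
    (hdiam : (2 <= diam e)%N)
    (o : rel T) (ho : forall v w : T, v != w -> o v w (+) o w v)
    (u : T) :
  vflow e o u <=
    ((Delta ^ 2 * (Delta - 1) ^ (diam e - 2) * (diam e) ^ 2)%N)%:R.
Proof.
rewrite /vflow.
apply: (@le_trans _ _ (((\sum_v \sum_(w | (v != w) && o v w)
   ((dist e u v + dist e u w <= diam e)%N : nat))%N)%:R)).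
  rewrite natr_sum; apply: ler_sum => v _; rewrite natr_sum; apply: ler_sum => w _.
  exact: flow_le.
rewrite ler_nat; exact: count_bound.
Qed.
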